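(* Let $G$ be a graph with $n\ge 2$ vertices and average degree $d$. Then $G$ has a (possibly non-induced) subgraph with all degrees lying in the range $[d',6d']$, where $$d'=\frac{\left\lfloor (d/4-1)/\lceil \log n\rceil\right\rfloor+1}{6}.$$
   Context: Logarithms are base 2. *)

(* Defs.v *)
From HB Require Import structures.
From mathcomp Require Import all_boot all_order all_algebra.
Set Implicit Arguments. Unset Strict Implicit. Unset Printing Implicit Defensive.
Import Order.TTheory GRing.Theory Num.Theory.

Definition simple_graph (T : finType) (e : rel T) : Prop :=
  symmetric e /\ irreflexive e.

Definition deg (T : finType) (e : rel T) (v : T) : nat := #|[set w | e v w]|.

Definition avg_deg (T : finType) (e : rel T) : rat :=
  ((\sum_(v : T) deg e v)%:R / (#|T|)%:R)%R.

(* ceil(log_2 n) for n >= 1 : the least k with n <= 2^k *)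
Definition ceil_log2 (n : nat) : nat := up_log 2 n.

Definition dprime (d : rat) (n : nat) : rat :=
  (((Num.floor ((d / 4%:R - 1) / (ceil_log2 n)%:R) + 1)%:~R) / 6%:R)%R.

Definition is_subgraph (T : finType) (e : rel T) (S : {set T}) (f : rel T) : Prop :=
  symmetric f /\ (forall x y, f x y -> e x y) /\
  (forall x y, f x y -> (x \in S) && (y \in S)).

(* Main.v *)
Require Import Defs.
From mathcomp Require Import all_boot all_order all_algebra.
From mathcomp Require Import zify ring lra.
Import Order.TTheory GRing.Theory Num.Theory.
Set Implicit Arguments. Unset Strict Implicit.

Section Comb.
Variable T : finType.
Implicit Types (f e r F : rel T) (W X Y : {set T}).

Definition dg f W v : nat := \sum_(w in W) f v w.

Lemma dgE f W v : dg f W v = \sum_w ((w \in W) && f v w).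
Proof. rewrite /dg big_mkcond; apply: eq_bigr => w _; by case: (w \in W). Qed.

Lemma degE f v : deg f v = \sum_w f v w.
Proof.
rewrite /deg -sum1_card big_mkcond /=; apply: eq_bigr => w _; rewrite inE.
by case: (f v w).
Qed.

Lemma dg_le_deg f W v : dg f W v <= deg f v.
Proof. rewrite dgE degE; apply: leq_sum => w _; by case: (w \in W); case: (f v w). Qed.

Lemma dg_supp f W v : (forall w, f v w -> w \in W) -> dg f W v = deg f v.
Proof.
move=> H; rewrite dgE degE; apply: eq_bigr => w _.
by case E: (f v w); [rewrite (H _ E) | rewrite andbF].
Qed.

Lemma dg_set0 f v : dg f set0 v = 0.
Proof. by rewrite /dg big_set0. Qed.

Lemma core f t : symmetric f -> forall W,
  2 * (t - 1) * #|W| < \sum_(v in W) dg f W v ->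
  exists W', [/\ W' \subset W, W' != set0 & forall v, v \in W' -> t <= dg f W' v].
Proof.
move=> fs Wi H0.
suff: forall n W, #|W| <= n -> 2 * (t - 1) * #|W| < \sum_(v in W) dg f W v ->
  exists W', [/\ W' \subset W, W' != set0 & forall v, v \in W' -> t <= dg f W' v].
  by move=> H; apply: (H _ Wi (leqnn _) H0).
elim=> [|n IH] W hW hs.
  have W0: W = set0 by apply/eqP; rewrite -cards_eq0; lia.
  by move: hs; rewrite W0 big_set0 ltn0.
case: (boolP [forall v in W, t <= dg f W v]) => [/forall_inP hall | hn].
  exists W; split => //.
  apply/negP => /eqP W0; by move: hs; rewrite W0 big_set0 ltn0.
have [v vW vlt]: exists2 v, v \in W & dg f W v < t.
  move: hn; rewrite negb_forall_in => /exists_inP [v vW hv].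
  by exists v; rewrite // ltnNge.
set W' := W :\ v.
have cW : #|W| = #|W'|.+1 by rewrite (cardsD1 v W) vW.
have key : \sum_(u in W) dg f W u <= \sum_(u in W') dg f W' u + 2 * dg f W v.
  rewrite (big_setD1 v vW) /=.
  have e1 : \sum_(u in W') dg f W u = \sum_(u in W') f u v + \sum_(u in W') dg f W' u.
    rewrite -big_split /=; apply: eq_bigr => u _; by rewrite /dg (big_setD1 v vW).
  have e2 : \sum_(u in W') f u v <= dg f W v.
    rewrite /dg (big_setD1 v vW) /=.
    apply: leq_trans (leq_addl _ _); apply: leq_sum => u _; by rewrite fs.
  rewrite e1; lia.
have [W'' [s1 s2 s3]] := IH W' ltac:(lia) ltac:(nia).
exists W''; split => //; apply: subset_trans s1 _; exact: subsetDl.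
Qed.

End Comb.

Section M.
Variable T : finType.
Implicit Types (f e r F : rel T) (W X Y : {set T}).

Lemma maxF r k : symmetric r -> irreflexive r ->
  exists F : rel T, [/\ symmetric F, (forall x y, F x y -> r x y),
    (forall v, deg F v <= k) &
    (forall x y, r x y -> [|| F x y, deg F x == k | deg F y == k])].
Proof.
move=> rs ri.
pose valid (E : {set T * T}) :=
  [forall x, forall y, ((x, y) \in E) ==> r x y && ((y, x) \in E)] &&
  [forall v, #|[set w | (v, w) \in E]| <= k].
have v0 : valid set0.
  apply/andP; split; apply/forallP => x.
    by apply/forallP => y; rewrite inE.
  rewrite (_ : [set w | (x, w) \in set0] = set0) ?cards0 //.
  by apply/setP => w; rewrite !inE.
case: (@arg_maxnP _ (set0 : {set T * T}) valid (fun E : {set T * T} => #|E|) v0) => E vE hmax.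
move: (vE); rewrite /valid => /andP [/forallP h1 /forallP h2].
have h1' : forall x y, (x, y) \in E -> r x y && ((y, x) \in E).
  by move=> x y; move: (h1 x) => /forallP /(_ y) /implyP.
exists (fun x y => (x, y) \in E); split.
- move=> x y; apply/idP/idP => /h1' /andP [] //.
- by move=> x y /h1' /andP [].
- by move=> v; apply: h2.
move=> x y rxy.
case: (boolP ((x, y) \in E)) => //= nxy.
have dlt : forall v, deg (fun x y => (x, y) \in E) v != k -> #|[set w | (v, w) \in E]| < k.
  by move=> v; rewrite /deg ltn_neqAle h2 andbT.
case dxk: (deg _ x == k) => //; case dyk: (deg _ y == k) => //.
have dx := dlt x (negbT dxk); have dy := dlt y (negbT dyk); exfalso.
have xny : x != y by apply/eqP => exy; move: rxy; rewrite exy ri.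
pose E' := (x, y) |: ((y, x) |: E).
have vE' : valid E'.
  apply/andP; split.
    apply/forallP => a; apply/forallP => b; apply/implyP.
    rewrite !inE !xpair_eqE => /orP [/andP [/eqP -> /eqP ->] | /orP [/andP [/eqP -> /eqP ->] | hab]].
    + by rewrite rxy !eqxx /= ?orbT.
    + by rewrite rs rxy !eqxx.
    + by move: (h1' a b hab) => /andP [-> ->]; rewrite !orbT.
  apply/forallP => v.
  case: (eqVneq v x) => [-> | vx].
    apply: (@leq_trans #|y |: [set w | (x, w) \in E]|).
      apply: subset_leq_card; apply/subsetP => w; rewrite !inE !xpair_eqE eqxx /=.
      by rewrite (negbTE xny) /= => /orP [-> | ->]; rewrite ?orbT.
    by rewrite cardsU1; apply: leq_trans (leq_add (leq_b1 _) (leqnn _)) _; rewrite add1n.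
  case: (eqVneq v y) => [-> | vy].
    apply: (@leq_trans #|x |: [set w | (y, w) \in E]|).
      apply: subset_leq_card; apply/subsetP => w; rewrite !inE !xpair_eqE eqxx /=.
      by rewrite eq_sym (negbTE xny) /= => /orP [-> | ->]; rewrite ?orbT.
    by rewrite cardsU1; apply: leq_trans (leq_add (leq_b1 _) (leqnn _)) _; rewrite add1n.
  apply: leq_trans (h2 v); apply: subset_leq_card; apply/subsetP => w.
  by rewrite !inE !xpair_eqE (negbTE vx) (negbTE vy).
have := hmax E' vE'.
rewrite /E' cardsU1 cardsU1 !inE !xpair_eqE (negbTE nxy) (negbTE xny) /=.
lia.
Qed.

End M.

Section C.
Variable T : finType.
Implicit Types (f e r F : rel T) (W X Y : {set T}).

Lemma unsat e F r k Y x :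
  (forall x y, r x y -> [|| F x y, deg F x == k | deg F y == k]) ->
  (forall y, y \in Y -> e x y -> r x y) -> deg F x != k ->
  dg e Y x <= deg F x + dg e (Y :&: [set v | deg F v == k]) x.
Proof.
move=> hmax hr dx.
rewrite !dgE degE -big_split /=; apply: leq_sum => y _.
case yY: (y \in Y) => //=; case exy: (e x y) => //=.
have := hmax _ _ (hr _ yY exy); rewrite (negbTE dx) /= => /orP [-> // | dy].
by rewrite !inE yY dy /= addn1.
Qed.

Lemma trim (A : {set T}) m : m <= #|A| -> exists B : {set T}, B \subset A /\ #|B| = m.
Proof.
elim: m => [|m IH] h.
  by exists set0; rewrite sub0set cards0.
have [B [sB cB]] := IH (ltnW h).
have : 0 < #|A :\: B| by rewrite cardsD (setIidPr sB); lia.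
rewrite card_gt0 => /set0Pn [a]; rewrite inE => /andP [aB aA].
exists (a |: B); split.
  by apply/subsetP => w; rewrite !inE => /orP [/eqP -> // | /(subsetP sB)].
by rewrite cardsU1 aB cB.
Qed.

Lemma sum_sat F W k : (forall x y, F x y -> y \in W) ->
  k * #|W :&: [set v | deg F v == k]| <= \sum_(v in W) dg F W v.
Proof.
move=> hs.
rewrite mulnC -sum_nat_const big_mkcond [X in _ <= X]big_mkcond /=.
apply: leq_sum => v _; rewrite !inE.
case vW: (v \in W) => //=; case: eqP => // <-.
by rewrite dg_supp // => w; apply: hs.
Qed.

Definition goal e k := exists (S : {set T}) (f : rel T),
  [/\ symmetric f, (forall x y, f x y -> e x y),
      (forall x y, f x y -> (x \in S) && (y \in S)), S != set0 &
      forall v, v \in S -> k <= 6 * deg f v /\ deg f v <= k].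

Lemma succ e F W k : symmetric F -> (forall x y, F x y -> e x y) ->
  (forall v, deg F v <= k) -> 0 < k -> W != set0 ->
  k * #|W| <= 3 * \sum_(v in W) dg F W v -> goal e k.
Proof.
move=> Fs Fe Fk k0 W0 hs.
set t := (k + 5) %/ 6.
have t1 : 6 * (t - 1) < k by rewrite /t; lia.
have t2 : k <= 6 * t by rewrite /t; lia.
have Wp : 0 < #|W| by rewrite card_gt0.
have h3 : 6 * (t - 1) * #|W| < k * #|W| by rewrite ltn_pmul2r.
have [W' [s1 s2 s3]] := core Fs (t := t) (W := W) ltac:(nia).
exists W', (fun x y => [&& x \in W', y \in W' & F x y]); split.
- by move=> x y; rewrite Fs; case: (x \in W'); case: (y \in W').
- by move=> x y /and3P [_ _ /Fe].
- by move=> x y /and3P [-> -> _].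
- by [].
move=> v vW.
have -> : deg (fun x y => [&& x \in W', y \in W' & F x y]) v = dg F W' v.
  rewrite degE dgE; apply: eq_bigr => w _; by rewrite vW.
split; first by have := s3 v vW; lia.
exact: leq_trans (dg_le_deg _ _ _) (Fk v).
Qed.

End C.

Section D.
Variable T : finType.
Implicit Types (f e r F : rel T) (W X Y : {set T}).

Lemma rounds e k : symmetric e -> irreflexive e -> 0 < k ->
  forall a X Y d, X :&: Y = set0 -> #|X| = #|Y| -> X != set0 ->
  (forall x, x \in X -> d <= dg e Y x) -> 2 ^ a * #|Y| < 3 ^ a ->
  (k - 1) * a + 1 <= d -> goal e k.
Proof.
move=> es ei k0; elim=> [|a IH] X Y d dXY cXY X0 hd ha hdd.
  have Y0 : Y = set0 by apply/eqP; rewrite -cards_eq0; move: ha; rewrite !expn0; lia.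
  move: X0 => /set0Pn [x xX]; have := hd x xX; rewrite Y0 dg_set0; lia.
pose r := fun x y => ((x \in X) && (y \in Y) || (x \in Y) && (y \in X)) && e x y.
have rs : symmetric r.
  by move=> x y; rewrite /r es; case: (x \in X); case: (y \in Y); case: (x \in Y); case: (y \in X).
have ri : irreflexive r by move=> x; rewrite /r ei andbF.
have [F [Fs Fr Fk Fmax]] := maxF k rs ri.
set W := X :|: Y.
have Fsupp : forall x y, F x y -> y \in W.
  move=> x y /Fr; rewrite /r !inE; by case: (y \in X); case: (y \in Y); rewrite ?orbT ?andbF.
have W0 : W != set0.
  move: X0 => /set0Pn [x xX]; apply/set0Pn; exists x; by rewrite inE xX.
case: (leqP (k * #|W|) (3 * \sum_(v in W) dg F W v)) => [hs | hf].
  by apply: (succ (F := F) (W := W)) => // x y /Fr /andP [].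
set S := [set v | deg F v == k].
have hsum := sum_sat k Fsupp.
have cW : #|W| = #|X| + #|Y| by rewrite cardsU dXY cards0 subn0.
have cWS : #|W :&: S| = #|X :&: S| + #|Y :&: S|.
  rewrite setIUl cardsU.
  have -> : X :&: S :&: (Y :&: S) = set0.
    apply/eqP; rewrite -subset0 -dXY; apply/subsetP => v.
    by rewrite !inE => /andP [/andP [-> _] /andP [-> _]].
  by rewrite cards0 subn0.
have h1 : 3 * (#|X :&: S| + #|Y :&: S|) < 2 * #|Y|.
  rewrite -(ltn_pmul2l k0); move: hf hsum; rewrite cWS cW cXY; nia.
set Xu := X :\: S.
have cXu : #|Xu| = #|X| - #|X :&: S| by rewrite cardsD.
have dxu : forall x, x \in Xu -> d - (k - 1) <= dg e (Y :&: S) x.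
  move=> x; rewrite !inE => /andP [xS xX].
  have := unsat (e := e) (r := r) (Y := Y) Fmax (x := x).
  move=> /(_ _ xS) H.
  have H' : dg e Y x <= deg F x + dg e (Y :&: S) x.
    apply: H => y yY exy; by rewrite /r xX yY exy.
  have := hd x xX; have := Fk x; move: xS => /eqP xS; lia.
have [X' [sX' cX']] := trim (A := Xu) (m := #|Y :&: S|) ltac:(lia).
have Ysp : 0 < #|Y :&: S|.
  have : 0 < #|Xu| by lia.
  rewrite card_gt0 => /set0Pn [x xXu].
  have := dxu x xXu; rewrite card_gt0; case: eqP => [-> | //].
  rewrite dg_set0; lia.
apply: (IH X' (Y :&: S) (d - (k - 1))).
- apply/setP => v; rewrite !inE.
  case vX': (v \in X') => //=.
  have : v \in X by move: (subsetP sX' v vX'); rewrite inE => /andP [].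
  move=> vX; move/setP: dXY => /(_ v); rewrite !inE vX /= => ->; by [].
- by [].
- by rewrite -card_gt0 cX'.
- by move=> x /(subsetP sX') /dxu.
- move: ha; rewrite !expnS => ha.
  have : 2 ^ a * (3 * #|Y :&: S|) < 2 ^ a * (2 * #|Y|).
    by rewrite ltn_pmul2l ?expn_gt0 //; lia.
  nia.
- nia.
Qed.

End D.

Section E.
Variable T : finType.
Implicit Types (f e r F : rel T) (W X Y : {set T}).

Lemma pow89 n : 8 ^ n <= 9 ^ n.
Proof. elim: n => // n IH; rewrite !expnS; exact: leq_mul. Qed.

Lemma mc e k L : symmetric e -> irreflexive e -> 0 < k -> 0 < #|T| ->
  #|T| <= 2 ^ L -> 0 < L ->
  4 * #|T| * ((k - 1) * L + 1) <= \sum_v deg e v -> goal e k.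
Proof.
move=> es ei k0 n0 nL L0 hsum.
set d0 := 2 * (k - 1) * L + 2.
have hs' : \sum_(v in [set: T]) dg e [set: T] v = \sum_v deg e v.
  by apply: eq_big => [v|v _]; rewrite ?inE // dg_supp // => w; rewrite inE.
have [W [_ W0 hW]] := core es (t := d0) (W := [set: T])
   ltac:(rewrite hs' cardsT; rewrite /d0; nia).
pose r := fun x y => [&& x \in W, y \in W & e x y].
have rs : symmetric r by move=> x y; rewrite /r es; case: (x \in W); case: (y \in W).
have ri : irreflexive r by move=> x; rewrite /r ei !andbF.
have [F [Fs Fr Fk Fmax]] := maxF k rs ri.
have Fsupp : forall x y, F x y -> y \in W by move=> x y /Fr /and3P [].
case: (leqP (k * #|W|) (3 * \sum_(v in W) dg F W v)) => [hs | hf].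
  by apply: (succ (F := F) (W := W)) => // x y /Fr /and3P [].
set S := [set v | deg F v == k].
have hsum2 : k * #|W :&: S| <= \sum_(v in W) dg F W v := sum_sat k Fsupp.
have h1 : 3 * #|W :&: S| < #|W|.
  rewrite -(ltn_pmul2l k0); move: hf hsum2; nia.
set U := W :\: S.
have cU : #|U| = #|W| - #|W :&: S| by rewrite cardsD.
have du : forall x, x \in U -> d0 - (k - 1) <= dg e (W :&: S) x.
  move=> x; rewrite !inE => /andP [xS xW].
  have := unsat (e := e) (r := r) (Y := W) Fmax (x := x).
  move=> /(_ _ xS) H.
  have H' : dg e W x <= deg F x + dg e (W :&: S) x.
    apply: H => y yY exy; by rewrite /r xW yY exy.
  have := hW x xW; have := Fk x; move: xS => /eqP xS; lia.
have [X0 [sX0 cX0]] := trim (A := U) (m := #|W :&: S|) ltac:(lia).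
have Ysp : 0 < #|W :&: S|.
  have : 0 < #|U| by lia.
  rewrite card_gt0 => /set0Pn [x xU].
  have := du x xU; rewrite card_gt0; case: eqP => [-> | //].
  rewrite dg_set0 /d0; nia.
have WT : #|W| <= #|T| by apply: max_card.
apply: (rounds es ei k0 (a := (2 * L).-1) (X := X0) (Y := W :&: S) (d := d0 - (k - 1))).
- apply/eqP; rewrite -subset0; apply/subsetP => v; rewrite !inE.
  case vX: (v \in X0) => //=.
  by move: (subsetP sX0 v vX); rewrite !inE => /andP [/negbTE -> _]; rewrite andbF.
- by [].
- by rewrite -card_gt0 cX0.
- by move=> x /(subsetP sX0) /du.
- have [L' eL] : exists L', L = L'.+1 by exists L.-1; lia.
  rewrite eL in nL *.
  have -> : (2 * L'.+1).-1 = (2 * L').+1 by lia.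
  have h2 : 2 ^ (2 * L').+1 * (3 * #|W :&: S|) < 2 ^ (2 * L').+1 * 2 ^ L'.+1.
    by rewrite ltn_pmul2l ?expn_gt0 //; lia.
  have h3 : 2 ^ (2 * L').+1 * 2 ^ L'.+1 = 4 * 8 ^ L'.
    rewrite -expnD.
    have -> : (2 * L').+1 + L'.+1 = 2 + 3 * L' by lia.
    by rewrite expnD expnM.
  have h4 : 3 ^ (2 * L').+1 * 3 = 9 * 9 ^ L'.
    rewrite -expnSr.
    have -> : (2 * L').+2 = 2 + 2 * L' by lia.
    by rewrite expnD expnM.
  have := pow89 L'; nia.
- have [L' eL] : exists L', L = L'.+1 by exists L.-1; lia.
  rewrite /d0 eL; nia.
Qed.

End E.

Unset Implicit Arguments.

Theorem lemma2p1 (T : finType) (e : rel T) :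
  simple_graph e -> (2 <= #|T|)%N ->
  exists (S : {set T}) (f : rel T),
    is_subgraph e S f /\ S != set0 /\
    (forall v, v \in S ->
       (dprime (avg_deg e) #|T| <= (deg f v)%:R)%R /\
       ((deg f v)%:R <= 6%:R * dprime (avg_deg e) #|T|)%R).
Proof.
move=> [es ei] n2.
have nL : (#|T| <= 2 ^ ceil_log2 #|T|)%N by apply: up_logP.
have L0 : (0 < ceil_log2 #|T|)%N by rewrite /ceil_log2 up_log_gt0 n2.
have d0 : (0 <= avg_deg e)%R by rewrite /avg_deg divr_ge0 ?ler0n.
have q1 : (-1 <= (avg_deg e / 4%:R - 1) / (ceil_log2 #|T|)%:R)%R.
  rewrite ler_pdivlMr ?ltr0n //.
  have : (1 <= (ceil_log2 #|T|)%:R :> rat)%R by rewrite ler1n.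
  lra.
have fl : (-1 <= Num.floor ((avg_deg e / 4%:R - 1) / (ceil_log2 #|T|)%:R))%R.
  by rewrite floor_ge_int.
have [k hk] : exists k : nat,
    (Num.floor ((avg_deg e / 4%:R - 1) / (ceil_log2 #|T|)%:R) + 1)%R = (Posz k).
  exists (absz (Num.floor ((avg_deg e / 4%:R - 1) / (ceil_log2 #|T|)%:R) + 1)%R).
  lia.
have hd : dprime (avg_deg e) #|T| = (k%:R / 6%:R)%R by rewrite /dprime hk.
rewrite hd.
case: k hk hd => [|k] hk hd.
  have : (0 < #|T|)%N by lia.
  rewrite -cardsT card_gt0 => /set0Pn [v0 _].
  exists [set v0], (fun _ _ => false); split; [|split].
  - by split; [|split].
  - by apply/set0Pn; exists v0; rewrite inE.
  move=> v _.
  have -> : deg (fun _ _ => false) v = 0%N by rewrite degE big1.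
  by rewrite mul0r mulr0.
have fk : Num.floor ((avg_deg e / 4%:R - 1) / (ceil_log2 #|T|)%:R) = (Posz k) by lia.
have hq : (k%:R <= (avg_deg e / 4%:R - 1) / (ceil_log2 #|T|)%:R :> rat)%R.
  by have := floor_le ((avg_deg e / 4%:R - 1) / (ceil_log2 #|T|)%:R); rewrite fk.
move: hq; rewrite ler_pdivlMr ?ltr0n // => hq.
have hq2 : ((4 * #|T| * (k * ceil_log2 #|T| + 1))%:R <= (\sum_v deg e v)%:R :> rat)%R.
  have np : (0 < (#|T|)%:R :> rat)%R by rewrite ltr0n; lia.
  move: hq; rewrite /avg_deg.
  set s := ((\sum_v deg e v)%:R : rat).
  set m := ((#|T|)%:R : rat).
  set l := ((ceil_log2 #|T|)%:R : rat).
  rewrite !natrM natrD natrM -/m -/l => hq.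
  have : (4 * (k%:R * l + 1) <= s / m)%R by lra.
  rewrite ler_pdivlMr // => h.
  have -> : (4%:R * m * (k%:R * l + 1%:R) = 4 * (k%:R * l + 1) * m :> rat)%R by ring.
  exact: h.
rewrite ler_nat in hq2.
have [S [f [fs fe fsupp S0 hS]]] : goal e k.+1.
  apply: (mc es ei (L := ceil_log2 #|T|)) => //; first by lia.
  by rewrite subn1 /=.
exists S, f; split; [by split; [|split] | split => // v vS].
have [h1 h2] := hS v vS.
split.
  rewrite ler_pdivrMr ?ltr0n // -natrM ler_nat; lia.
rewrite mulrC divfK ?pnatr_eq0 // ler_nat //.
Qed.
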